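(* If $\mathcal F=(A,X,f)$ and $\mathcal G=(B,X,g)$ are complete D2-directable fuzzy automata, then their direct product $\mathcal F\times\mathcal G$ is D2-directable.
   Context: A fuzzy automaton is a triple $\mathcal F=(A,X,f)$ with $A$ a finite nonempty set of states, $X$ a finite nonempty alphabet, and $f:A\times X\times A\to[0,1]$, extended to words by $f^*(a,\varepsilon,a)=1$, $f^*(a,\varepsilon,b)=0$ ($b\neq a$), $f^*(a,vx,b)=\max_{c\in A}\min\{f^*(a,v,c),f(c,x,b)\}$. Let $\mathcal F(a,w)=\{b\in A\mid f^*(a,w,b)>0\}$. $\mathcal F$ is complete if $\mathcal F(a,x)\neq\emptyset$ for all $a\in A$, $x\in X$. $\mathcal F$ is D2-directable if there is $w\in X^*$ with $\mathcal F(a,w)=\mathcal F(b,w)$ for all $a,b\in A$. The direct product is $\mathcal F\times\mathcal G=(A\times B,X,h)$ with $h((a,b),x,(a',b'))=\min\{f(a,x,a'),g(b,x,b')\}$. *)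

(* Defs.v *)
From mathcomp Require Import all_boot all_order all_algebra.
Set Implicit Arguments. Unset Strict Implicit. Unset Printing Implicit Defensive.
Import Order.TTheory GRing.Theory Num.Theory.
Local Open Scope ring_scope.

Record fuzzy_automaton (R : realFieldType) (X : finType) := FuzzyAutomaton {
  fa_state :> finType;
  fa_trans : fa_state -> X -> fa_state -> R;
  fa_state_nonempty : (0 < #|fa_state|)%N;
  fa_trans_range : forall a x b, 0 <= fa_trans a x b <= 1 }.

(* The max is a big max with base 0,
   which is harmless since all values are >= 0 and the state set is nonempty. *)
Definition ext_step (R : realFieldType) (S X : finType) (f : S -> X -> S -> R)
  (g : S -> R) (x : X) : S -> R :=
  fun b => \big[Order.max/0]_(c : S) Order.min (g c) (f c x b).

(* f^*(a, w, b): f^*(a, eps, b) = [a == b], f^*(a, vx, b) = max_c min(f^*(a,v,c), f(c,x,b)). *)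
Definition ext_trans (R : realFieldType) (S X : finType) (f : S -> X -> S -> R)
  (a : S) (w : seq X) : S -> R :=
  foldl (ext_step f) (fun b => if a == b then 1 else 0) w.

Definition reach (R : realFieldType) (X : finType) (F : fuzzy_automaton R X)
  (a : F) (w : seq X) : {set F} :=
  [set b | 0 < ext_trans (@fa_trans R X F) a w b].

Definition complete_fa (R : realFieldType) (X : finType) (F : fuzzy_automaton R X) :=
  forall (a : F) (x : X), reach a [:: x] != set0.

Definition D2_directable (R : realFieldType) (X : finType) (F : fuzzy_automaton R X) :=
  exists w : seq X, forall a b : F, reach a w = reach b w.

Definition prod_trans (R : realFieldType) (X : finType) (F G : fuzzy_automaton R X)
  (p : (F * G)%type) (x : X) (q : (F * G)%type) : R :=
  Order.min (fa_trans p.1 x q.1) (fa_trans p.2 x q.2).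

Lemma prod_state_nonempty (R : realFieldType) (X : finType) (F G : fuzzy_automaton R X) :
  (0 < #|{: (F * G)%type}|)%N.
Proof.
rewrite card_prod muln_gt0; apply/andP; split; exact: fa_state_nonempty.
Qed.

Lemma prod_trans_range (R : realFieldType) (X : finType) (F G : fuzzy_automaton R X) p x q :
  0 <= @prod_trans R X F G p x q <= 1.
Proof.
rewrite /prod_trans.
have /andP[h1 h2] := fa_trans_range p.1 x q.1.
have /andP[h3 h4] := fa_trans_range p.2 x q.2.
by rewrite le_min h1 h3 ge_min h2.
Qed.

Definition prod_fa (R : realFieldType) (X : finType) (F G : fuzzy_automaton R X)
  : fuzzy_automaton R X :=
  @FuzzyAutomaton R X (F * G)%type (@prod_trans R X F G)
    (prod_state_nonempty F G) (@prod_trans_range R X F G).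

(* Main.v *)
Require Import Defs.
From mathcomp Require Import all_boot all_order all_algebra.
Set Implicit Arguments. Unset Strict Implicit. Unset Printing Implicit Defensive.
Import Order.TTheory GRing.Theory Num.Theory.

Section Crisp.
Variables (R : realFieldType) (S X : finType) (f : S -> X -> S -> R).

Definition stepS (A : {set S}) (x : X) : {set S} :=
  [set b | [exists c, (c \in A) && (0 < f c x b)%R]].

Lemma bigmax_pos (h : S -> R) :
  (0 < \big[Order.max/0]_c h c)%R = [exists c, (0 < h c)%R].
Proof.
rewrite ltNge; apply/idP/existsP.
- move=> H; apply/existsP; apply: contraNT H => /existsPn H.
  apply/bigmax_leP; split => // i _; by rewrite leNgt H.
- case=> c Hc; apply/negP => /bigmax_leP [_ H].
  by move: (H c isT); rewrite leNgt Hc.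
Qed.

Lemma ext_stepE (g : S -> R) x :
  [set b | (0 < ext_step f g x b)%R] = stepS [set b | (0 < g b)%R] x.
Proof.
apply/setP => b; rewrite !inE /ext_step bigmax_pos.
apply/existsP/existsP => [[c Hc]|[c Hc]]; exists c; move: Hc;
  by rewrite lt_min inE.
Qed.

Lemma foldlE (g : S -> R) w :
  [set b | (0 < foldl (ext_step f) g w b)%R] = foldl stepS [set b | (0 < g b)%R] w.
Proof.
elim: w g => [|x w IH] g //=. by rewrite IH ext_stepE.
Qed.

Lemma ext_transE a w :
  [set b | (0 < ext_trans f a w b)%R] = foldl stepS [set a] w.
Proof.
rewrite /ext_trans foldlE; congr foldl; apply/setP => b; rewrite !inE.
by rewrite [a == b]eq_sym; case: (b == a); rewrite ?ltr01 ?ltxx.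
Qed.

Lemma foldS_mem A w b :
  (b \in foldl stepS A w) = [exists c, (c \in A) && (b \in foldl stepS [set c] w)].
Proof.
elim: w A => [|x w IH] A /=.
  apply/idP/existsP => [Hb|[c /andP[Hc]]]; first by exists b; rewrite Hb inE eqxx.
  by rewrite inE => /eqP ->.
rewrite IH; apply/existsP/existsP => [[d /andP[Hd Hb]]|[c /andP[Hc Hb]]].
  move: Hd; rewrite inE => /existsP [c /andP [Hc Hcd]].
  exists c; rewrite Hc /= IH; apply/existsP; exists d; rewrite Hb andbT inE.
  by apply/existsP; exists c; rewrite inE eqxx.
move: Hb; rewrite IH => /existsP [d /andP [Hd Hb]].
move: Hd; rewrite inE => /existsP [c' /andP [Hc' Hcd]].
move: Hc'; rewrite inE => /eqP ?; subst c'.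
exists d; rewrite Hb andbT inE; apply/existsP; exists c; by rewrite Hc.
Qed.

Lemma foldS_nonempty A w :
  (forall a x, stepS [set a] x != set0) -> A != set0 -> foldl stepS A w != set0.
Proof.
move=> Hc; elim: w A => [|x w IH] A //= HA; apply: IH.
case/set0Pn: HA => a Ha; case/set0Pn: (Hc a x) => b; rewrite inE => /existsP [c /andP [Hc' Hcb]].
apply/set0Pn; exists b; rewrite inE; apply/existsP; exists a; move: Hc'; rewrite inE => /eqP Eca.
by rewrite Ha -Eca.
Qed.

End Crisp.

Lemma set1_nonempty (T : finType) (a : T) : [set a] != set0.
Proof. by apply/set0Pn; exists a; rewrite inE. Qed.


Lemma reachE (R : realFieldType) (X : finType) (F : fuzzy_automaton R X) (a : F) w :
  reach a w = foldl (stepS (@fa_trans R X F)) [set a] w.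
Proof. exact: ext_transE. Qed.

Lemma prod_foldS (R : realFieldType) (X : finType) (F G : fuzzy_automaton R X)
   (A : {set F}) (B : {set G}) w :
  foldl (stepS (@fa_trans R X (prod_fa F G))) (setX A B) w =
  setX (foldl (stepS (@fa_trans R X F)) A w) (foldl (stepS (@fa_trans R X G)) B w).
Proof.
elim: w A B => [|x w IH] A B //=; rewrite -IH; congr foldl.
apply/setP => [[p q]]; rewrite !inE /=.
apply/existsP/andP => [[[c d]]|[/existsP[c Hc] /existsP[d Hd]]].
  rewrite inE /= /prod_trans lt_min => /andP [/andP [Hc Hd] /andP [H1 H2]].
  by split; apply/existsP; [exists c; rewrite Hc | exists d; rewrite Hd].
exists (c, d); move: Hc Hd => /andP [Hc H1] /andP [Hd H2].
by rewrite inE /= Hc Hd /prod_trans lt_min H1 H2.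
Qed.

Theorem proposition6p8 (R : realFieldType) (X : finType) (F G : fuzzy_automaton R X) :
  (0 < #|X|)%N ->
  complete_fa F -> complete_fa G -> D2_directable F -> D2_directable G ->
  D2_directable (prod_fa F G).
Proof.
move=> _ cF cG [u Hu] [v Hv].
have cF' : forall (a : F) x, stepS (@fa_trans R X F) [set a] x != set0.
  by move=> a x; move: (cF a x); rewrite reachE.
have cG' : forall (a : G) x, stepS (@fa_trans R X G) [set a] x != set0.
  by move=> a x; move: (cG a x); rewrite reachE.
have key : forall (H : fuzzy_automaton R X) (v : seq X),
    (forall (a : H) x, stepS (@fa_trans R X H) [set a] x != set0) ->
    (forall a b : H, reach a v = reach b v) ->
    forall u (a b : H), reach a (u ++ v) = reach b (u ++ v).
  move=> H v' cH Hv' u' a b; rewrite !reachE !foldl_cat.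
  suff E : forall a0 : H, foldl (stepS (@fa_trans R X H)) (foldl (stepS (@fa_trans R X H)) [set a0] u') v'
                          = reach a0 v' by rewrite !E; apply: Hv'.
  move=> a0; case/set0Pn: (foldS_nonempty u' cH (set1_nonempty a0)) => c0 Hc0.
  apply/setP => z; rewrite foldS_mem; apply/existsP/idP => [[c /andP [_ Hz]]|Hz].
    by rewrite (Hv' a0 c) reachE.
  by exists c0; rewrite Hc0 -reachE (Hv' c0 a0).
exists (u ++ v) => [[a1 a2] [b1 b2]].
have HF : forall a b : F, reach a (u ++ v) = reach b (u ++ v).
  move=> a b; rewrite !reachE !foldl_cat.
  have E : forall a0 : F, foldl (stepS (@fa_trans R X F)) [set a0] u = reach a u by move=> a0; rewrite -reachE (Hu a0 a).
  by rewrite !E.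
have HG := key G v cG' Hv u.
have X1 : forall (p : F) (q : G), [set (p, q)] = setX [set p] [set q].
  by move=> p q; apply/setP => [[p' q']]; rewrite !inE xpair_eqE.
rewrite !reachE /= !X1 !prod_foldS -!reachE.
by rewrite (HF a1 b1) (HG a2 b2).
Qed.
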